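(* Let $G_1$ and $G_2$ be connected graphs, each with at least two vertices. Then $$\chi_d^t(G_1\star G_2)\leq \chi_d^t(G_1)+\chi_d^t(G_2).$$
   Context: All graphs are simple and finite. A total dominator coloring (TD-coloring) of a graph $G$ with no isolated vertex is a proper vertex coloring of $G$ in which every vertex of $G$ is adjacent to every vertex of some color class (a color class being the set of all vertices receiving a given color). The total dominator chromatic number (TDC-number) $\chi_d^t(G)$ is the minimum number of colors in a TD-coloring of $G$. The neighbourhood corona $G_1\star G_2$ of graphs $G_1$ and $G_2$ is the graph obtained by taking one copy of $G_1$ and $|V(G_1)|$ copies of $G_2$, and, for each $i$, joining every neighbour (in $G_1$) of the $i$-th vertex of $G_1$ to every vertex of the $i$-th copy of $G_2$. *)

(* Defs.v *)
From mathcomp Require Import all_boot.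
Set Implicit Arguments. Unset Strict Implicit. Unset Printing Implicit Defensive.

Definition simple_graph (T : finType) (e : rel T) : Prop :=
  symmetric e /\ irreflexive e.

Definition connected_graph (T : finType) (e : rel T) : Prop :=
  forall x y : T, connect e x y.

Definition proper_coloring (T : finType) (e : rel T) (k : nat) (c : T -> 'I_k) : bool :=
  [forall x, forall y, e x y ==> (c x != c y)].

Definition total_dominating_coloring (T : finType) (e : rel T) (k : nat)
    (c : T -> 'I_k) : bool :=
  [forall v, exists i : 'I_k,
      [exists u, c u == i] && [forall u, (c u == i) ==> e v u]].

Definition td_coloring (T : finType) (e : rel T) (k : nat) (c : T -> 'I_k) : bool :=
  proper_coloring e c && total_dominating_coloring e c.

Definition has_td_coloring (T : finType) (e : rel T) (k : nat) : bool :=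
  [exists c : {ffun T -> 'I_k}, td_coloring e c].

(* total dominator chromatic number: least k admitting a TD-colouring
   (a TD-colouring with #|T| colours always exists when G has no isolated vertex) *)
Definition tdc_number (T : finType) (e : rel T) : nat :=
  find (has_td_coloring e) (iota 0 #|T|.+1).

(* neighbourhood corona G1 * G2: vertices are inl a (copy of G1) and
   inr (i, y) (vertex y of the i-th copy of G2). *)
Definition ncorona_rel (T1 T2 : finType) (e1 : rel T1) (e2 : rel T2)
    (x y : T1 + (T1 * T2)) : bool :=
  match x, y with
  | inl a, inl b => e1 a b
  | inl a, inr (i, _) => e1 a i
  | inr (i, _), inl a => e1 i a
  | inr (i, u), inr (j, w) => (i == j) && e2 u w
  end.

(* Main.v *)
Require Import Defs.
From mathcomp Require Import all_boot.

Lemma tdc_le (T : finType) (e : rel T) k :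
  has_td_coloring e k -> tdc_number e <= k.
Proof.
move=> Hk; rewrite leqNgt; apply/negP => Hlt.
have Hs : find (has_td_coloring e) (iota 0 #|T|.+1) <= size (iota 0 #|T|.+1)
  by apply: find_size.
rewrite size_iota in Hs.
have Hk' : k < #|T|.+1 by apply: leq_trans Hlt Hs.
have := before_find 0 Hlt.
by rewrite nth_iota // add0n Hk.
Qed.

Lemma tdc_has (T : finType) (e : rel T) :
  has_td_coloring e #|T| -> has_td_coloring e (tdc_number e).
Proof.
move=> H.
have Hh : has (has_td_coloring e) (iota 0 #|T|.+1).
  by apply/hasP; exists #|T|; rewrite // mem_iota add0n ltnSn.
have := nth_find 0 Hh; move: Hh; rewrite has_find size_iota => Hh.
by rewrite nth_iota // add0n.
Qed.

Lemma id_td (T : finType) (e : rel T) :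
  simple_graph e -> connected_graph e -> 1 < #|T| -> has_td_coloring e #|T|.
Proof.
move=> [Hsym Hirr] Hc Hcard.
apply/existsP; exists [ffun x => enum_rank x].
apply/andP; split.
  apply/forallP => x; apply/forallP => y; apply/implyP => Hxy.
  rewrite !ffunE; apply/negP => /eqP /enum_rank_inj Exy.
  by move: Hxy; rewrite Exy Hirr.
apply/forallP => v.
have [w Hw] : exists w, w != v.
  move: Hcard; rewrite (cardD1 v) inE add1n ltnS => /card_gt0P [w].
  by rewrite inE => /andP [Hw _]; exists w.
have /connectP [p Hp Hl] := Hc v w.
case: p Hp Hl => [|u p] /=; first by move=> _ E; by rewrite E eqxx in Hw.
move=> /andP [Hvu _] _.
apply/existsP; exists (enum_rank u); apply/andP; split.
  by apply/existsP; exists u; rewrite ffunE.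
apply/forallP => z; apply/implyP; rewrite ffunE => /eqP /enum_rank_inj ->.
exact: Hvu.
Qed.

Theorem theorem3 (T1 T2 : finType) (e1 : rel T1) (e2 : rel T2) :
  simple_graph e1 -> simple_graph e2 ->
  connected_graph e1 -> connected_graph e2 ->
  1 < #|T1| -> 1 < #|T2| ->
  tdc_number (ncorona_rel e1 e2) <= tdc_number e1 + tdc_number e2.
Proof.
move=> S1 S2 C1 C2 N1 N2.
have /existsP [c1 /andP [P1 D1]] := @tdc_has _ _ (@id_td _ _ S1 C1 N1).
have /existsP [c2 /andP [P2 _]] := @tdc_has _ _ (@id_td _ _ S2 C2 N2).
set k1 := tdc_number e1 in c1 P1 D1 *.
set k2 := tdc_number e2 in c2 P2 *.
apply: tdc_le; apply/existsP.
exists [ffun x => match x with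
                 | inl a => lshift k2 (c1 a)
                 | inr (i, y) => rshift k1 (c2 y) end].
have lr : forall a b, lshift k2 a != rshift k1 b :> 'I_(k1 + k2).
  move=> a b; apply/negP => /eqP /(congr1 val) /= E.
  by have := ltn_ord a; rewrite E ltnNge leq_addr.
apply/andP; split.
  apply/forallP => x; apply/forallP => y; apply/implyP; rewrite !ffunE.
  case: x => [a|[i u]]; case: y => [b|[j w]] /= H.
  - apply/negP => /eqP /lshift_inj E.
    by move/forallP: P1 => /(_ a) /forallP /(_ b) /implyP /(_ H); rewrite E eqxx.
  - exact: lr.
  - by rewrite eq_sym lr.
  - case/andP: H => _ H; apply/negP => /eqP /rshift_inj E.
    by move/forallP: P2 => /(_ u) /forallP /(_ w) /implyP /(_ H); rewrite E eqxx.
apply/forallP => x.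
have [a Ha] : exists a, forall z, ncorona_rel e1 e2 x (inl z) = e1 a z.
  by case: x => [a|[i u]]; [exists a | exists i].
move/forallP: D1 => /(_ a) /existsP [j /andP [/existsP [u Hu] Hall]].
apply/existsP; exists (lshift k2 j); apply/andP; split.
  by apply/existsP; exists (inl u); rewrite ffunE (eqP Hu).
apply/forallP => z; apply/implyP; rewrite ffunE.
case: z => [b|[i w]].
  move=> /eqP /lshift_inj Eb; rewrite Ha.
  by move/forallP: Hall => /(_ b) /implyP; apply; rewrite Eb.
by move=> /eqP E; move: (lr j (c2 w)); rewrite E eqxx.
Qed.
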